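(* For any finite simple graph $X$ and any update sequence $\pi\in S_X$ there exists a bijection $\psi:\mathcal{S}\to\mathcal{S}$ such that $\psi\circ\mathbf{F}^\uparrow_\pi=\mathbf{F}^\downarrow_\pi\circ\psi$; that is, $\mathbf{F}^\uparrow_\pi$ and $\mathbf{F}^\downarrow_\pi$ are topologically conjugate (their phase spaces are isomorphic as directed graphs).
   Context: Let $X$ be a finite simple graph with vertices $1,\dots,n$; $d(v)$ is the degree of $v$ and $n[v]$ the closed neighborhood of $v$. An extended vertex state is $s_v=(x_v,k_v)\in\{0,1\}\times\{1,\dots,d(v)+1\}$; $\mathcal{S}=\prod_v(\{0,1\}\times\{1,\dots,d(v)+1\})$. Let $\sigma(x[v])=|\{u\in n[v]:x_u=1\}|$. Both vertex functions set $x_v'=1$ iff $\sigma(x[v])\ge k_v$ (else $0$). Increasing: $k_v'=k_v+1$ if $x_v=0$ and $\sigma(x[v])\ge k_v$, else $k_v'=k_v$. Decreasing: $k_v'=k_v-1$ if $x_v=1$ and $\sigma(x[v])<k_v$, else $k_v'=k_v$. The local maps $F^\uparrow_v,F^\downarrow_v:\mathcal{S}\to\mathcal{S}$ update only coordinate $v$ by the respective rule. For a permutation $\pi=(\pi_1,\dots,\pi_n)$ of the vertices, $\mathbf{F}^\star_\pi=F^\star_{\pi_n}\circ\cdots\circ F^\star_{\pi_1}$ for $\star\in\{\uparrow,\downarrow\}$. *)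

(* Defs.v *)
From mathcomp Require Import all_boot.
From mathcomp Require Import zify.
Set Implicit Arguments. Unset Strict Implicit. Unset Printing Implicit Defensive.

Section Defs.
Variables (T : finType) (e : rel T).

Definition deg (v : T) : nat := #|[set u | e v u]|.

Definition cnbhd (v : T) : {set T} := [set u | (u == v) || e v u].

(* raw extended states: v |-> (x_v, k_v) *)
Definition rawstate := {ffun T -> bool * nat}.

Definition sigma (s : rawstate) (v : T) : nat :=
  #|[set u in cnbhd v | (s u).1]|.

Definition admissible (s : rawstate) : bool :=
  [forall v, (1 <= (s v).2 <= deg v + 1)%N].

Definition upd_up (s : rawstate) (v : T) : bool * nat :=
  let x := (s v).1 in let k := (s v).2 in
  ((k <= sigma s v)%N,
   if ~~ x && (k <= sigma s v)%N then k.+1 else k).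

Definition upd_down (s : rawstate) (v : T) : bool * nat :=
  let x := (s v).1 in let k := (s v).2 in
  ((k <= sigma s v)%N,
   if x && (sigma s v < k)%N then k.-1 else k).

Definition rawF_up (v : T) (s : rawstate) : rawstate :=
  [ffun u => if u == v then upd_up s v else s u].
Definition rawF_down (v : T) (s : rawstate) : rawstate :=
  [ffun u => if u == v then upd_down s v else s u].


Lemma sigma_le_deg (s : rawstate) v : ~~ (s v).1 -> (sigma s v <= deg v)%N.
Proof.
move=> xv; apply: subset_leq_card; apply/subsetP => u.
rewrite !inE => /andP[/orP[/eqP -> | ->] //].
by rewrite (negbTE xv).
Qed.

Lemma sigma_ge1 (s : rawstate) v : (s v).1 -> (0 < sigma s v)%N.
Proof.
move=> xv; apply/card_gt0P; exists v; by rewrite !inE eqxx xv.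
Qed.

Lemma rawF_up_adm v s : admissible s -> admissible (rawF_up v s).
Proof.
move=> /forallP adm; apply/forallP => u; rewrite ffunE.
case: eqP => [-> | _]; last exact: adm.
rewrite /upd_up /=.
have /andP[h1 h2] := adm v.
case: ifP => // /andP[xv kle].
have hd := sigma_le_deg xv.
apply/andP; split; lia.
Qed.

Lemma rawF_down_adm v s : admissible s -> admissible (rawF_down v s).
Proof.
move=> /forallP adm; apply/forallP => u; rewrite ffunE.
case: eqP => [-> | _]; last exact: adm.
rewrite /upd_down /=.
have /andP[h1 h2] := adm v.
case: ifP => // /andP[xv klt].
have := sigma_ge1 xv => hs.
apply/andP; split; lia.
Qed.

Definition state := {s : rawstate | admissible s}.

Definition F_up (v : T) (s : state) : state :=
  exist _ (rawF_up v (val s)) (rawF_up_adm v (valP s)).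
Definition F_down (v : T) (s : state) : state :=
  exist _ (rawF_down v (val s)) (rawF_down_adm v (valP s)).

Definition SDS_up (pi : seq T) (s : state) : state :=
  foldl (fun t v => F_up v t) s pi.
Definition SDS_down (pi : seq T) (s : state) : state :=
  foldl (fun t v => F_down v t) s pi.

End Defs.

(* Main.v *)
Require Import Defs.
From mathcomp Require Import all_boot.
From mathcomp Require Import zify.
Set Implicit Arguments. Unset Strict Implicit. Unset Printing Implicit Defensive.

Section Aux.
Variables (T : finType) (e : rel T).
Hypothesis e_irr : irreflexive e.

Definition rawpsi (s : rawstate T) : rawstate T :=
  [ffun u => (~~ (s u).1, (deg e u + 2 - (s u).2)%N)].

Lemma rawpsi_adm s : admissible e s -> admissible e (rawpsi s).
Proof.
move=> /forallP adm; apply/forallP => u; rewrite ffunE /=.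
have /andP[h1 h2] := adm u; apply/andP; split; lia.
Qed.

Lemma card_cnbhd v : #|cnbhd e v| = (deg e v).+1.
Proof.
have -> : cnbhd e v = v |: [set u | e v u].
  by apply/setP => u; rewrite !inE.
by rewrite cardsU1 inE e_irr.
Qed.

Lemma sigma_le s v : (sigma e s v <= (deg e v).+1)%N.
Proof.
rewrite -card_cnbhd; apply: subset_leq_card; apply/subsetP => u.
by rewrite inE => /andP[].
Qed.

Lemma sigma_psi s v : sigma e (rawpsi s) v = ((deg e v).+1 - sigma e s v)%N.
Proof.
rewrite /sigma -card_cnbhd -(cardsID [set u | (s u).1] (cnbhd e v)).
have -> : [set u in cnbhd e v | (rawpsi s u).1] = cnbhd e v :\: [set u | (s u).1].
  by apply/setP => u; rewrite !inE ffunE /= andbC.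
have -> : [set u in cnbhd e v | (s u).1] = cnbhd e v :&: [set u | (s u).1].
  by apply/setP => u; rewrite !inE.
lia.
Qed.

Lemma psi_commute v s : admissible e s ->
  rawpsi (rawF_up e v s) = rawF_down e v (rawpsi s).
Proof.
move=> /forallP adm; apply/ffunP => u; rewrite !ffunE.
case: (u =P v) => [-> | _]; last by [].
idtac.
rewrite /upd_up /upd_down sigma_psi !ffunE /=.
have /andP[h1 h2] := adm v; have hs := sigma_le s v.
case: (s v) h1 h2 => x k /= h1 h2.
case: x => /=; f_equal.
all: try (case: ifP; case: ifP; lia).
all: apply/idP/idP; lia.
Qed.

Lemma rawpsiK s : admissible e s -> rawpsi (rawpsi s) = s.
Proof.
move=> /forallP adm; apply/ffunP => u; rewrite !ffunE /=.
have /andP[h1 h2] := adm u; case: (s u) h1 h2 => x k /= h1 h2.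
rewrite negbK; f_equal; lia.
Qed.

Definition psi (s : state e) : state e :=
  exist _ (rawpsi (val s)) (rawpsi_adm (valP s)).

End Aux.

Theorem proposition3p4 (T : finType) (e : rel T)
  (e_sym : symmetric e) (e_irr : irreflexive e)
  (pi : seq T) (hpi : perm_eq pi (enum T)) :
  exists psi : state e -> state e,
    bijective psi /\
    (forall s, psi (@SDS_up T e pi s) = @SDS_down T e pi (psi s)).
Proof.
exists (@psi T e); split.
  exists (@psi T e) => s; apply: val_inj => /=; exact: rawpsiK (valP s).
elim: pi {hpi} => [|v p IH] s //.
rewrite /SDS_up /SDS_down /= in IH *.
have -> : F_down v (psi s) = psi (F_up v s).
  by apply: val_inj => /=; symmetry; apply: psi_commute => //; exact: (valP s).
exact: IH.
Qed.
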